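(* Let $n\ge 3$ and let $S\subseteq\mathbb{Z}_n\setminus\{0\}$ with $S=-S$. The circulant graph $\mathrm{Cay}(\mathbb{Z}_n,S)$ is $\mathbb{Z}_n$-distance antimagic if one of the following holds: (a) $n$ is even, $n/2\in S$, and, writing elements of $S$ as integers in $\{1,\ldots,n-1\}$, $S\setminus\{n/2\}$ contains exactly $2s$ even integers and $2t$ odd integers, where both $2(s-t)+1$ and $2(t-s)+1$ are coprime to $n$; (b) $\gcd(|S|,n)=1$. Moreover, if $|S|$ and $n$ are both even, then $\mathrm{Cay}(\mathbb{Z}_n,S)$ is not $\mathbb{Z}_n$-distance antimagic.
   Context: $\mathrm{Cay}(\mathbb{Z}_n,S)$ has vertex set $\mathbb{Z}_n$, with $x,y$ adjacent iff $x-y\in S$ (mod $n$). For a graph $G$ with $n$ vertices, a $\mathbb{Z}_n$-distance antimagic labelling is a bijection $f:V(G)\to\mathbb{Z}_n$ such that the weights $w_f(x)=\sum_{y\in N(x)} f(y)$ (mod $n$, $N(x)$ the open neighbourhood) are pairwise distinct; $G$ is $\mathbb{Z}_n$-distance antimagic if such a labelling exists. *)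

(* Defs.v *)
From HB Require Import structures.
From mathcomp Require Import all_boot all_order all_algebra.
Set Implicit Arguments. Unset Strict Implicit. Unset Printing Implicit Defensive.
Import Order.TTheory GRing.Theory Num.Theory.
Local Open Scope ring_scope.

Definition nbhd_weight (V : finType) (R : zmodType) (adj : rel V) (f : V -> R)
  (x : V) : R := \sum_(y | adj x y) f y.

Definition Zn_distance_antimagic (n : nat) (V : finType) (adj : rel V) : Prop :=
  exists f : V -> 'Z_n, bijective f /\ injective (nbhd_weight adj f).

Definition Cay (n : nat) (S : {set 'Z_n}) : rel 'Z_n := fun x y => (x - y) \in S.

(* Main.v *)
Require Import Defs.
From HB Require Import structures.
From mathcomp Require Import all_boot all_order all_algebra.
From mathcomp Require Import zify ring.
Import Order.TTheory GRing.Theory Num.Theory.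
Local Open Scope ring_scope.

Lemma wtE (m : nat) (S : {set 'Z_(m.+2)}) (f : 'Z_(m.+2) -> 'Z_(m.+2)) x :
  nbhd_weight (Cay S) f x = \sum_(a in S) f (x - a).
Proof.
rewrite /nbhd_weight /Cay (reindex_inj (h := fun a => x - a)); last first.
  by move=> a b /= /(congr1 (fun z => x - z)); rewrite !subKr.
by apply: eq_bigl => a; rewrite subKr.
Qed.

Lemma oddT m : ~~ odd m -> odd (Zp_trunc m.+2).+2 = false.
Proof. by rewrite /Zp_trunc /= negbK => /negbTE. Qed.

Lemma parD m (x y : 'Z_(m.+2)) : ~~ odd m -> odd (val (x + y)) = odd (val x) (+) odd (val y).
Proof. by move=> hm; rewrite /= odd_mod ?oddD // (oddT m hm). Qed.

Lemma parN m (x : 'Z_(m.+2)) : ~~ odd m -> odd (val (- x)) = odd (val x).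
Proof.
move=> hm; rewrite /= odd_mod ?(oddT m hm) // oddB; last exact: ltnW (ltn_ord x).
by move: (oddT m hm) => /= ->.
Qed.

Lemma parM m (x y : 'Z_(m.+2)) : ~~ odd m -> odd (val (x * y)) = odd (val x) && odd (val y).
Proof. by move=> hm; rewrite /= odd_mod ?oddM // (oddT m hm). Qed.

Lemma parn m k : ~~ odd m -> odd (val (k%:R : 'Z_(m.+2))) = odd k.
Proof. move=> hm; change (odd (nat_of_ord (k%:R : 'Z_(m.+2))) = odd k); rewrite val_Zp_nat // odd_mod //=. by rewrite (negbTE hm). Qed.

Lemma sumZ m : \sum_(x : 'Z_(m.+2)) x = ('C(m.+2, 2))%:R.
Proof.
rewrite -bin2_sum big_mkord natr_sum; apply: eq_bigr => i _.
by rewrite natr_Zp.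
Qed.

Lemma unitz m (z : int) : coprime `|z|%N m.+2 -> (z%:~R : 'Z_(m.+2)) \is a GRing.unit.
Proof.
case: z => k cz.
  by change ((k%:R : 'Z_(m.+2)) \is a GRing.unit); rewrite unitZpE // coprime_sym.
rewrite NegzE mulrNz unitrN.
by change ((k.+1%:R : 'Z_(m.+2)) \is a GRing.unit); rewrite unitZpE // coprime_sym.
Qed.

Lemma unitnB m (a b : nat) : coprime `|a%:Z - b%:Z|%N m.+2 ->
  ((a%:R - b%:R : 'Z_(m.+2)) \is a GRing.unit).
Proof. by move=> h; have := unitz _ _ h; rewrite intrB. Qed.

Lemma partB m (S : {set 'Z_(m.+2)}) : coprime #|S| m.+2 -> Zn_distance_antimagic m.+2 (Cay S).
Proof.
move=> cop; exists id; split; first by exists id.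
move=> x y; rewrite !wtE !sumrB !sumr_const.
move=> H. have H2 := congr1 (fun z : 'Z_(m.+2) => z + \sum_(i in S) i) H. rewrite !subrK in H2. rewrite -[x *+ _]mulr_natr -[y *+ _]mulr_natr in H2.
have hu : (#|S|%:R : 'Z_(m.+2)) \is a GRing.unit by rewrite unitZpE // coprime_sym.
exact: (mulIr hu).
Qed.

Lemma partNeg m (S : {set 'Z_(m.+2)}) : ~~ odd #|S| -> ~~ odd m ->
   ~ Zn_distance_antimagic m.+2 (Cay S).
Proof.
move=> hS hm [f [[g fK gK] winj]].
have finj : injective f := can_inj fK.
set T := \sum_(x : 'Z_(m.+2)) x.
have E1 : \sum_(x : 'Z_(m.+2)) nbhd_weight (Cay S) f x = T.
  by rewrite /T [RHS](reindex_inj winj).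
have E2 : \sum_(x : 'Z_(m.+2)) nbhd_weight (Cay S) f x = T *+ #|S|.
  under eq_bigr do rewrite wtE.
  rewrite exchange_big /= -sumr_const; apply: eq_bigr => a _.
  rewrite (reindex_inj (addIr a)) /=.
  under eq_bigr do rewrite addrK.
  by rewrite /T [RHS](reindex_inj finj).
have TN : T = - T by rewrite /T [LHS](reindex_inj oppr_inj) sumrN.
have T0 : T = 0.
  rewrite -E1 E2 -(odd_double_half #|S|) (negbTE hS) add0n -mul2n mulrnA.
  by rewrite mulr2n {1}TN addNr mul0rn.
move: T0; rewrite /T sumZ => /(congr1 (@nat_of_ord _)); rewrite val_Zp_nat //=.
have [j hj] : exists j, m = j.*2.
  by exists m./2; rewrite -{1}(odd_double_half m) (negbTE hm).
rewrite hj bin2.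
have e : ((j.*2).+2 * (j.*2).+2.-1)./2 = (j.+1 * (j.*2).+1)%N.
  by rewrite -[(j.*2).+2.-1]/((j.*2).+1) -doubleS -doubleMl doubleK.
rewrite e.
have e2 : (j.+1 * (j.*2).+1 = j * (j.*2).+2 + j.+1)%N by rewrite -!addnn; ring.
rewrite e2 modnMDl modn_small //; rewrite -addnn; lia.
Qed.

Lemma partA m (S : {set 'Z_(m.+2)}) (s t : nat) :
  ~~ odd m -> (((m.+2)./2)%:R : 'Z_(m.+2)) \in S ->
  #|[set x in S | (x != ((m.+2)./2)%:R) && ~~ odd (val x)]| = (2 * s)%N ->
  #|[set x in S | (x != ((m.+2)./2)%:R) && odd (val x)]| = (2 * t)%N ->
  coprime `|(2 * (s%:Z - t%:Z) + 1)%R|%N m.+2 ->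
  coprime `|(2 * (t%:Z - s%:Z) + 1)%R|%N m.+2 ->
  Zn_distance_antimagic m.+2 (Cay S).
Proof.
move=> hm; set h : 'Z_(m.+2) := _%:R => hS cE cO c1 c2.
pose e (b : bool) : 'Z_(m.+2) := if b then -1 else 1.
pose f (z : 'Z_(m.+2)) := e (odd (val z)) * z.
have ee b : e b * e b = 1 by case: b; rewrite /e ?mulrNN mulr1.
have eD b c : e (b (+) c) = e b * e c.
  by case: b; case: c; rewrite /e /= ?mulrNN ?mulr1 ?mul1r ?mulrN1.
have pe b z : odd (val (e b * z)) = odd (val z).
  by case: b; rewrite /e ?mulN1r ?mul1r ?parN.
have fK : involutive f by move=> z; rewrite /f pe mulrA ee mul1r.
set u := \sum_(a in S) e (odd (val a)).
set c := \sum_(a in S) e (odd (val a)) * a.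
have wE x : nbhd_weight (Cay S) f x = e (odd (val x)) * (u * x - c).
  rewrite wtE mulr_suml -sumrB mulr_sumr; apply: eq_bigr => a _.
  by rewrite /f parD // parN // eD -mulrA mulrBr.
have uE : u = (#|[set a in S | ~~ odd (val a)]|)%:R - (#|[set a in S | odd (val a)]|)%:R.
  rewrite /u (bigID (fun a => odd (val a))) /= addrC.
  rewrite (eq_big (fun a => a \in [set a in S | ~~ odd (val a)]) (fun=> 1)); last 2 first.
  - by move=> a; rewrite inE.
  - by move=> a /andP[_ /negbTE ->].
  rewrite [X in _ + X](eq_big (fun a => a \in [set a in S | odd (val a)]) (fun=> - 1)); last 2 first.
  - by move=> a; rewrite inE.
  - by move=> a /andP[_ ->].
  by rewrite sumrN !sumr_const.
have [pu uU] : odd (val u) /\ u \is a GRing.unit.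
  case hb : (odd (val h)).
  - have e1 : [set a in S | odd (val a)] = h |: [set x in S | (x != h) && odd (val x)].
      apply/setP => x; rewrite !inE; case: eqP => [->|] /=; by rewrite ?hS ?hb.
    have e2 : [set a in S | ~~ odd (val a)] = [set x in S | (x != h) && ~~ odd (val x)].
      apply/setP => x; rewrite !inE; case: eqP => [->|] /=; by rewrite ?hb ?andbF.
    have hn : h \notin [set x in S | (x != h) && odd (val x)] by rewrite inE eqxx andbF.
    rewrite uE e1 e2 cardsU1 hn cE cO add1n.
    split; first by rewrite parD // (parN _ _ hm) !parn //= !oddM.
    have U := @unitnB m (2 * s) (2 * t).+1; apply: U.
    have -> : ((2 * s)%:Z - (2 * t).+1%:Z = -(2 * (t%:Z - s%:Z) + 1))%R by lia.
    by rewrite abszN.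
  - have e1 : [set a in S | ~~ odd (val a)] = h |: [set x in S | (x != h) && ~~ odd (val x)].
      apply/setP => x; rewrite !inE; case: eqP => [->|] /=; by rewrite ?hS ?hb.
    have e2 : [set a in S | odd (val a)] = [set x in S | (x != h) && odd (val x)].
      apply/setP => x; rewrite !inE; case: eqP => [->|] /=; by rewrite ?hb ?andbF.
    have hn : h \notin [set x in S | (x != h) && ~~ odd (val x)] by rewrite inE eqxx andbF.
    rewrite uE e1 e2 cardsU1 hn cE cO add1n.
    split; first by rewrite parD // (parN _ _ hm) !parn //= !oddM.
    have U := @unitnB m (2 * s).+1 (2 * t); apply: U.
    have -> : ((2 * s).+1%:Z - (2 * t)%:Z = (2 * (s%:Z - t%:Z) + 1))%R by lia.
    by [].
clearbody u c f e.
exists f; split; first exact: (Bijective fK fK).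
move=> x y; rewrite !wE => Exy.
have px : odd (val x) = odd (val y).
  have := congr1 (fun z : 'Z_(m.+2) => odd (val z)) Exy.
  cbv beta; rewrite !pe !parD // !(parN _ _ hm) !parM // pu.
  by case: (odd (val x)); case: (odd (val y)); case: (odd (val c)).
rewrite px in Exy.
have := congr1 (fun z : 'Z_(m.+2) => e (odd (val y)) * z) Exy.
cbv beta; rewrite !mulrA ee !mul1r.
move/(congr1 (fun z : 'Z_(m.+2) => z + c)); rewrite !subrK.
exact: (mulrI uU).
Qed.

Theorem mainTheorem19 (n : nat) (S : {set 'Z_n}) :
  (2 < n)%N ->
  (0 : 'Z_n) \notin S ->
  (forall x : 'Z_n, x \in S -> - x \in S) ->
  ((  (* (a) *)
      (~~ odd n /\ ((n./2)%:R : 'Z_n) \in S /\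
       exists s t : nat,
         #|[set x in S | (x != (n./2)%:R) && ~~ odd (val x)]| = (2 * s)%N /\
         #|[set x in S | (x != (n./2)%:R) && odd (val x)]| = (2 * t)%N /\
         coprime `|(2 * (s%:Z - t%:Z) + 1)%R|%N n /\
         coprime `|(2 * (t%:Z - s%:Z) + 1)%R|%N n)
    \/ (* (b) *) coprime #|S| n) ->
   Zn_distance_antimagic n (Cay S))
  /\
  (~~ odd #|S| -> ~~ odd n -> ~ Zn_distance_antimagic n (Cay S)).
Proof.
case: n S => [|[|m]] // S _ _ _; split.
- case=> [[hn [hS [s [t [cE [cO [c1 c2]]]]]]] | cop].
  + have hm : ~~ odd m by rewrite /= negbK in hn.
    exact: (@partA m S s t hm hS cE cO c1 c2).
  + exact: (@partB m S).
- move=> hS hn; apply: (@partNeg m S hS); by rewrite /= negbK in hn.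
Qed.
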